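(* For any graph $G$, any vertex $v\in V(G)$, any integer $k\ge 2$ and any integer $r\ge 3$, $$R_r(\mathcal{B}(G),k)\le R(\mathcal{G}^*(v),k)+r-2.$$
   Context: For a graph $G$, a hypergraph $H$ is a Berge-$G$ hypergraph if there are an injective map $\phi:V(G)\to V(H)$ and pairwise distinct hyperedges $e_{xy}\in E(H)$, one for each $xy\in E(G)$, with $\phi(x),\phi(y)\in e_{xy}$. $\mathcal{B}(G)$ denotes the family of all Berge-$G$ hypergraphs. $K_n^r$ denotes the complete $r$-uniform hypergraph on $n$ vertices. For a family $\mathcal{H}$ of $r$-uniform hypergraphs and integers $k\ge 2$, $r\ge 2$, $R_r(\mathcal{H},k)$ is the smallest $n$ such that every $k$-coloring of the hyperedges of $K_n^r$ contains a monochromatic subhypergraph belonging to $\mathcal{H}$. For a family $\mathcal{G}$ of graphs, $R(\mathcal{G},k)$ is the smallest $n$ such that every $k$-coloring of the edges of the complete graph $K_n$ contains a monochromatic subgraph isomorphic to some member of $\mathcal{G}$. For a graph $G$ and $v\in V(G)$ with neighborhood $N(v)=\{q_1,\dots,q_t\}$, let $G'=G-v$. An extension of $G-v$ is any graph obtained from $G'$ by adding, for each $i=1,\dots,t$, an edge $q_ir_i$ not belonging to $G'$, where each $r_i$ is either a vertex of $G'$ or a new vertex not in $G'$ (new vertices may be shared by several $r_i$), and the $t$ added edges are pairwise distinct. $\mathcal{G}^*(v)$ denotes the family of all such extensions (it contains $G$ itself). *)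

(* Defs.v *)
From mathcomp Require Import all_boot.
Set Implicit Arguments. Unset Strict Implicit. Unset Printing Implicit Defensive.

(* A (finite simple) graph G is a type T : finType of vertices with a
   symmetric irreflexive adjacency relation e : rel T.
   Colourings of the edges of K_n (resp. hyperedges of K_n^r) with k colours
   are functions c : {set 'I_n} -> 'I_k; only their values on 2-sets
   [set x; y] (resp. r-sets) matter. *)

Definition upair_eq (V : Type) (a b c d : V) : Prop :=
  (a = c /\ b = d) \/ (a = d /\ b = c).

(* (F, f) is (isomorphic to) an extension of G - v, i.e. a member of
   G^*(v).  iota embeds V(G') = V(G) \ {v} into F; for each neighbour q of v,
   r q is the other endpoint of the added edge q r_q. *)
Definition is_extension (T : finType) (e : rel T) (v : T)
    (F : finType) (f : rel F) : Prop :=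
  exists (iota : T -> F) (r : T -> F),
    {in [pred x | x != v] &, injective iota} /\
    (forall a : F, (exists2 x, x != v & a = iota x) \/ (exists2 q, e v q & a = r q)) /\
    (forall q, e v q -> r q <> iota q) /\
    (forall q, e v q -> ~ exists y, [/\ y != v, e q y & r q = iota y]) /\
    (forall q q', e v q -> e v q' -> q <> q' ->
        ~ upair_eq (iota q) (r q) (iota q') (r q')) /\
    (forall a b : F, f a b <->
       ((exists x y, [/\ x != v, y != v, e x y & upair_eq a b (iota x) (iota y)]) \/
        (exists2 q, e v q & upair_eq a b (iota q) (r q)))).

(* Graph Ramsey property: every k-colouring of E(K_n) has a monochromatic
   subgraph isomorphic to a member of G^*(v).  R(G^*(v),k) is the least such n. *)
Definition ramsey_ext_prop (T : finType) (e : rel T) (v : T) (k n : nat) : Prop :=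
  forall c : {set 'I_n} -> 'I_k, exists col : 'I_k,
    exists (F : finType) (f : rel F), is_extension e v f /\
      exists phi : F -> 'I_n, injective phi /\
        forall a b, f a b -> c [set phi a; phi b] = col.

(* H (a hypergraph on vertex set V, given by its edge set) is a Berge-G
   hypergraph: injective phi : V(G) -> V, and pairwise distinct hyperedges
   E x y (one per edge xy of G, indexed by one of its orientations). *)
Definition is_berge (T : finType) (e : rel T) (V : finType)
    (H : {set {set V}}) : Prop :=
  exists (phi : T -> V) (E : T -> T -> {set V}),
    injective phi /\
    (forall x y, e x y -> [/\ E x y \in H, phi x \in E x y & phi y \in E x y]) /\
    (forall x y x' y', e x y -> e x' y' -> E x y = E x' y' -> upair_eq x y x' y').

(* Hypergraph Ramsey property: every k-colouring of E(K_n^r) has a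
   monochromatic Berge-G subhypergraph.  R_r(B(G),k) is the least such n. *)
Definition ramsey_berge_prop (T : finType) (e : rel T) (r k n : nat) : Prop :=
  forall c : {set 'I_n} -> 'I_k, exists col : 'I_k,
    is_berge e [set A : {set 'I_n} | (#|A| == r) && (c A == col)].

(* Main.v *)
Require Import Defs.
From mathcomp Require Import all_boot.
From mathcomp Require Import zify.

Lemma upair_inj (A B : Type) (g : A -> B) (a b c d : A) :
  injective g -> upair_eq (g a) (g b) (g c) (g d) -> upair_eq a b c d.
Proof. by move=> gi [[/gi -> /gi ->]|[/gi -> /gi ->]]; [left|right]. Qed.

Lemma upair_sym (A : Type) (a b c d : A) :
  upair_eq a b c d -> upair_eq c d a b.
Proof. by case=> [[-> ->]|[-> ->]]; [left|right]. Qed.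

Lemma pair_set_upair (V : finType) (a b c d : V) :
  [set a; b] = [set c; d] -> upair_eq a b c d.
Proof.
move=> H.
have ha : a \in [set c; d] by rewrite -H set21.
have hb : b \in [set c; d] by rewrite -H set22.
have hc : c \in [set a; b] by rewrite H set21.
have hd : d \in [set a; b] by rewrite H set22.
move: ha hb hc hd; rewrite !inE => /orP[]/eqP h1 /orP[]/eqP h2 /orP[]/eqP h3 /orP[]/eqP h4;
  subst; rewrite /upair_eq; tauto.
Qed.

Theorem theorem2 (T : finType) (e : rel T) (e_sym : symmetric e)
    (e_irr : irreflexive e) (v : T) (k r : nat) (hk : 2 <= k) (hr : 3 <= r)
    (n : nat) :
  ramsey_ext_prop e v k n -> ramsey_berge_prop e r k (n + r - 2).
Proof.
move=> HR c.
have hnN : n <= n + r - 2 by lia.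
have hsN : n < n + r - 2 by lia.
pose L := widen_ord hnN.
have L_inj : injective L by move=> i j H; apply/val_inj; exact: (congr1 val H).
pose S := ~: (L @: [set: 'I_n]).
pose s0 := Ordinal hsN.
have s0S : s0 \in S.
  rewrite inE; apply/imsetP => -[i _ /(congr1 val) /= Hi].
  have := ltn_ord i; lia.
have cardS : #|S| = r - 2.
  have := cardsC (L @: [set: 'I_n]).
  rewrite card_imset // cardsT !card_ord; rewrite -/S; lia.
pose c' := fun A : {set 'I_n} => c (S :|: L @: A).
have [col [F [f [Hext [phiF [phiF_inj Hcol]]]]]] := HR c'.
exists col.
case: Hext => iota [rr [Hinj [_ [Hloop [Hnotold [Hdist Hf]]]]]].
pose pa x y := if x == v then iota y else iota x.
pose pb x y := if x == v then rr y else if y == v then rr x else iota y.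
pose E x y := S :|: L @: [set phiF (pa x y); phiF (pb x y)].
pose phi x := if x == v then s0 else L (phiF (iota x)).
have evv : forall y, e v y -> y != v.
  by move=> y Hy; apply/eqP => Hyv; move: Hy; rewrite Hyv e_irr.
have fE : forall x y, e x y -> f (pa x y) (pb x y).
  move=> x y Hxy; apply/Hf; rewrite /pa /pb.
  have [xv|xv] := eqVneq x v.
    by subst x; right; exists y => //; left.
  have [yv|yv] := eqVneq y v.
    subst y.
    by right; exists x; [rewrite e_sym | left].
  by left; exists x, y; split => //; left.
have neq : forall x y, e x y -> pa x y != pb x y.
  move=> x y Hxy; rewrite /pa /pb.
  have [xv|xv] := eqVneq x v.
    by subst x; apply/eqP => H; apply: (Hloop y Hxy); rewrite H.
  have [yv|yv] := eqVneq y v.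
    subst y; apply/eqP => H; apply: (Hloop x); [by rewrite e_sym | by rewrite H].
  apply/eqP => /Hinj H.
  by move: Hxy; rewrite H ?inE // e_irr.
have disj : forall P : {set 'I_n}, S :&: L @: P = set0.
  move=> P; apply/setP => z; rewrite !inE.
  case/boolP: (z \in L @: P) => [/imsetP[i _ ->]|]; last by rewrite andbF.
  by rewrite imset_f ?inE.
have diffS : forall P : {set 'I_n}, (S :|: L @: P) :\: S = L @: P.
  by move=> P; rewrite setDUl setDv set0U; apply/setDidPl; rewrite -setI_eq0 setIC disj.
have newnew : forall q q', e v q -> e v q' ->
    upair_eq (iota q) (rr q) (iota q') (rr q') -> q = q'.
  move=> q q' Hq Hq' U; have [//|qq] := eqVneq q q'.
  by exfalso; exact: (Hdist q q' Hq Hq' (elimN eqP qq) U).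
have oldnew : forall x y q, x != v -> y != v -> e x y -> e v q ->
    ~ upair_eq (iota x) (iota y) (iota q) (rr q).
  move=> x y q xv yv Hxy Hq [[E1 E2]|[E1 E2]].
    have xq : x = q := Hinj x q xv (evv q Hq) E1.
    subst x; apply: (Hnotold q Hq); exists y; split => //.
  have yq : y = q := Hinj y q yv (evv q Hq) E2.
  subst y; apply: (Hnotold q Hq); exists x; split => //; by rewrite e_sym.
exists phi, E; split; [|split].
- move=> x y; rewrite /phi.
  have [xv|xv] := eqVneq x v; have [yv|yv] := eqVneq y v.
  + by subst.
  + move=> H; exfalso; move: s0S; rewrite H inE imset_f ?inE //.
  + move=> H; exfalso; move: s0S; rewrite -H inE imset_f ?inE //.
  + by move/L_inj/phiF_inj/Hinj; apply; rewrite inE.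
- move=> x y Hxy; split.
  + rewrite inE; apply/andP; split.
      rewrite /E cardsU disj cards0 subn0 cardS card_imset // cards2.
      by rewrite (inj_eq phiF_inj) neq //; lia.
    by apply/eqP; exact: Hcol _ _ (fE _ _ Hxy).
  + rewrite /phi /E /pa; have [xv|xv] := eqVneq x v.
      by rewrite inE s0S.
    by rewrite inE imset_f ?orbT // set21.
  + rewrite /phi /E /pa /pb; have [yv|yv] := eqVneq y v.
      by rewrite inE s0S.
    have [xv|xv] := eqVneq x v.
      by rewrite inE imset_f ?orbT // set21.
    by rewrite inE imset_f ?orbT // set22.
- move=> x y x' y' Hxy Hx'y' HE.
  have HP := congr1 (fun A => A :\: S) HE; rewrite /= /E !diffS in HP.
  have U := @upair_inj _ _ phiF _ _ _ _ phiF_inj (@pair_set_upair _ _ _ _ _ (imset_inj L_inj HP)).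
  move: U; rewrite /pa /pb.
  have [xv|xv] := eqVneq x v; have [yv|yv] := eqVneq y v;
  have [x'v|x'v] := eqVneq x' v; have [y'v|y'v] := eqVneq y' v;
  subst; rewrite ?e_irr // in Hxy Hx'y' *; move=> U.
  + by have -> := newnew _ _ Hxy Hx'y' U; left.
  + by have -> := newnew y x' Hxy (etrans (e_sym _ _) Hx'y') U; right.
  + by exfalso; apply: (oldnew x' y' y) => //; apply: upair_sym.
  + by have -> := newnew x y' (etrans (e_sym _ _) Hxy) Hx'y' U; right.
  + by have -> := newnew x x' (etrans (e_sym _ _) Hxy) (etrans (e_sym _ _) Hx'y') U; left.
  + by exfalso; apply: (oldnew x' y' x) => //; [rewrite e_sym | apply: upair_sym].
  + by exfalso; apply: (oldnew x y y') => //.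
  + by exfalso; apply: (oldnew x y x') => //; rewrite e_sym.
  + case: U => [[/Hinj E1 /Hinj E2]|[/Hinj E1 /Hinj E2]].
      by left; split; [apply: E1 | apply: E2].
    by right; split; [apply: E1 | apply: E2].
Qed.
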